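(* Let $G$ be a connected simple graph with maximum degree at most $3$ and minimum degree at least $2$, in which no two adjacent vertices both have degree $3$. Let $M_1,M_2$ be disjoint matchings of $G$ such that $|M_1\cup M_2|$ is maximum over all pairs of disjoint matchings, and, subject to this, such that $G_{M_1,M_2}$ has the minimum number of connected components. Then there is no edge of $M_1\cup M_2$ joining a vertex of one component of $G_{M_1,M_2}$ that is a $P_3$ to a vertex of a different component of $G_{M_1,M_2}$ that is a $P_3$.
   Context: $G_{M_1,M_2}$ denotes the subgraph of $G$ induced by the edge set $E(G)\setminus(M_1\cup M_2)$. $P_k$ denotes a path on $k$ vertices. *)

(* Defs.v *)
From mathcomp Require Import all_boot.
Set Implicit Arguments. Unset Strict Implicit. Unset Printing Implicit Defensive.

Section Graph.
Variable T : finType.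
Variable e : rel T.

Definition simple_graph : Prop := symmetric e /\ irreflexive e.

Definition edges : {set {set T}} := [set [set x; y] | x in T, y in T & e x y].

Definition deg (x : T) : nat := #|[set y | e x y]|.

Definition connected_graph : Prop := forall x y : T, connect e x y.

Definition is_matching (M : {set {set T}}) : Prop :=
  M \subset edges /\
  (forall f g, f \in M -> g \in M -> f != g -> [disjoint f & g]).

(* G_{M1,M2}: the subgraph induced by the edge set E(G) \ (M1 u M2);
   its vertices are the endpoints of these edges. *)
Definition rem_edges (M1 M2 : {set {set T}}) : {set {set T}} :=
  edges :\: (M1 :|: M2).

Definition rem_vertices (M1 M2 : {set {set T}}) : {set T} :=
  [set x | [exists f in rem_edges M1 M2, x \in f]].

Definition rem_adj (M1 M2 : {set {set T}}) : rel T :=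
  fun x y => [set x; y] \in rem_edges M1 M2.

Definition rem_comp (M1 M2 : {set {set T}}) (x : T) : {set T} :=
  [set y | connect (rem_adj M1 M2) x y].

Definition rem_comps (M1 M2 : {set {set T}}) : {set {set T}} :=
  [set rem_comp M1 M2 x | x in rem_vertices M1 M2].

Definition ncomp (M1 M2 : {set {set T}}) : nat := #|rem_comps M1 M2|.

(* a component is a P_3: 3 vertices and (being connected) exactly 2 edges *)
Definition is_P3_comp (M1 M2 : {set {set T}}) (C : {set T}) : Prop :=
  #|C| = 3 /\ #|[set f in rem_edges M1 M2 | f \subset C]| = 2.

Definition disjoint_matchings (M1 M2 : {set {set T}}) : Prop :=
  is_matching M1 /\ is_matching M2 /\ [disjoint M1 & M2].

End Graph.

(* Main.v *)
Require Import Defs.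
From mathcomp Require Import all_boot.
From mathcomp Require Import zify.

Lemma edgesP (T : finType) (e : rel T) g :
  reflect (exists x y, e x y /\ g = [set x; y]) (g \in edges e).
Proof.
apply: (iffP imset2P).
  by case=> x y _; rewrite inE => /andP[_ exy] ->; exists x, y.
by case=> x [y [exy ->]]; apply: (@Imset2spec _ _ _ _ _ _ _ x y) => //; rewrite inE.
Qed.

Lemma edge_split (T : finType) (e : rel T) g u :
  simple_graph e -> g \in edges e -> u \in g ->
  exists w, [/\ e u w, w != u & g = [set u; w]].
Proof.
case=> sym irr /edgesP [x [y [exy ->]]]; rewrite in_set2 => /orP[]/eqP->.
  exists y; split=> //; apply/eqP => eyx; subst y; by rewrite irr in exy.
exists x; rewrite sym; split=> //; last by rewrite setUC.
apply/eqP => eyx; subst y; by rewrite irr in exy.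
Qed.

Lemma edge_card (T : finType) (e : rel T) g :
  simple_graph e -> g \in edges e -> #|g| = 2.
Proof.
move=> sg /edgesP [x [y [exy ->]]]; rewrite cards2.
case: sg => _ irr; case: eqP => // exy'; subst y; by rewrite irr in exy.
Qed.

Lemma disjU (X : finType) (A B : {set X}) :
  [disjoint A & B] -> #|A :|: B| = #|A| + #|B|.
Proof. by rewrite -setI_eq0 cardsU => /eqP ->; rewrite cards0 subn0. Qed.

Lemma match_uniq (T : finType) (e : rel T) M f g u :
  is_matching e M -> f \in M -> g \in M -> u \in f -> u \in g -> g = f.
Proof.
case=> _ H fM gM uf ug; apply/eqP; apply/negPn/negP => ne.
have := H g f gM fM ne; by rewrite -setI_eq0 => /eqP/setP/(_ u); rewrite !inE ug uf.
Qed.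

Lemma deg_lb (T : finType) (e : rel T) (A B : {set {set T}}) x :
  simple_graph e -> A \subset edges e -> B \subset edges e -> [disjoint A & B] ->
  #|[set g in edges e :\: (A :|: B) | x \in g]| + #|[set g in A | x \in g]|
   + #|[set g in B | x \in g]| <= deg e x.
Proof.
move=> sg sA sB dAB.
have E : [set g in edges e | x \in g] \subset (fun y => [set x; y]) @: [set y | e x y].
  apply/subsetP => g; rewrite inE => /andP[ge xg].
  have [w [exw _ ->]] := edge_split _ _ _ _ sg ge xg.
  by apply/imsetP; exists w => //; rewrite inE.
have L := leq_trans (subset_leq_card E) (leq_imset_card _ _).
apply: leq_trans L.
rewrite -!disjU.
- apply: subset_leq_card; apply/subsetP => g; rewrite !inE.
  case/orP=> [/orP[|]|]; case/andP => // H ->; rewrite andbT.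
  + by case/andP: H.
  + exact: (subsetP sA).
  + exact: (subsetP sB).
- rewrite -setI_eq0; apply/eqP/setP => g; rewrite !inE.
  case: (boolP (g \in A)) => gA; case: (boolP (g \in B)) => gB //=; rewrite ?andbF //.
  by rewrite -setI_eq0 in dAB; move/eqP/setP: dAB => /(_ g); rewrite !inE gA gB.
- rewrite -setI_eq0; apply/eqP/setP => g; rewrite !inE.
  by case: (g \in A); rewrite ?andbF //= andbF.
Qed.

Definition dmswap (T : finType) (e : rel T) A B :
  disjoint_matchings e A B -> disjoint_matchings e B A.
Proof. by case=> [mA [mB d]]; split=> //; split=> //; rewrite disjoint_sym. Qed.

Lemma ar1 a b : a = true + b -> 3 = true + a -> 1 < b -> False.
Proof. move=> /= H1 H2 H3; lia. Qed.

Lemma claim (T : finType) (e : rel T) (A B : {set {set T}}) (C : {set T}) u :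
  simple_graph e -> (forall x : T, 2 <= deg e x <= 3) ->
  (forall x y : T, e x y -> ~ (deg e x = 3 /\ deg e y = 3)) ->
  disjoint_matchings e A B ->
  (forall N1 N2, disjoint_matchings e N1 N2 -> #|N1 :|: N2| <= #|A :|: B|) ->
  #|C| = 3 -> #|[set g in edges e :\: (A :|: B) | g \subset C]| = 2 ->
  u \in C -> 0 < #|[set g in A | u \in g]| ->
  exists w, [/\ w \in C, w != u, [set u; w] \in edges e :\: (A :|: B)
                & #|[set g in A | w \in g]| = 0].
Proof.
move=> sg degs no33 [mA [mB dAB]] maxi C3 /eqP/cards2P [h1 [h2 [ne12 E]]] uC au.
have hin : forall h, h \in [set h1; h2] ->
   [/\ h \in edges e, h \notin A, h \notin B, h \subset C & #|h| = 2].
  move=> h; rewrite -E !inE negb_or => /andP[/andP[/andP[hA hB] he] hC].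
  by split=> //; apply: edge_card sg he.
have : (u \in h1) || (u \in h2).
  apply/negPn/negP; rewrite negb_or => /andP[u1 u2].
  have CD : #|C :\ u| = 2 by move: C3; rewrite (cardsD1 u) uC /=; lia.
  have sub : forall h, h \in [set h1; h2] -> u \notin h -> h = C :\ u.
    move=> h /hin [_ _ _ hC h2c] uh; apply/eqP; rewrite eqEcard CD h2c leqnn andbT.
    apply/subsetP => y yh; rewrite !inE (subsetP hC _ yh) andbT.
    by apply/eqP => yu; subst y; rewrite yh in uh.
  have e1 := sub h1 (setU11 _ _) u1.
  have e2 : h2 = C :\ u by apply: sub => //; rewrite !inE eqxx orbT.
  by rewrite e1 e2 eqxx in ne12.
move=> H12.
wlog u1 : h1 h2 ne12 E hin H12 / u \in h1.
  move=> W; case/orP: (H12) => H; first exact: (W h1 h2).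
  apply: (W h2 h1) => //.
  - by rewrite eq_sym.
  - by rewrite E; apply: setUC.
  - move=> h hh; apply: hin; rewrite setUC; exact: hh.
  - by rewrite orbC.
have [h1e h1A h1B h1C _] := hin h1 (setU11 _ _).
have [h2e h2A h2B h2C h2c] : [/\ h2 \in edges e, h2 \notin A, h2 \notin B, h2 \subset C & #|h2| = 2].
  by apply: hin; rewrite !inE eqxx orbT.
have [w [euw wu h1E]] := edge_split _ _ _ _ sg h1e u1.
have wC : w \in C by apply: (subsetP h1C); rewrite h1E !inE eqxx orbT.
have h1R : h1 \in edges e :\: (A :|: B) by rewrite !inE negb_or h1A h1B h1e.
exists w; split=> //; first by rewrite -h1E.
apply/eqP; rewrite eqn0Ngt; apply/negP => aw.
have uw2 : (u \in h2) || (w \in h2).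
  apply/negPn/negP; rewrite negb_or => /andP[u2 w2].
  have : h2 \subset (C :\ u) :\ w.
    apply/subsetP => y yh; rewrite !inE (subsetP h2C _ yh) andbT.
    by apply/andP; split; apply/eqP => ey; subst y; [rewrite yh in w2 | rewrite yh in u2].
  move/subset_leq_card; rewrite h2c.
  have wCu : w \in C :\ u by rewrite !inE wu wC.
  have := cardsD1 u C; have := cardsD1 w (C :\ u); rewrite wCu uC C3 /=.
  move: #|C :\ u| #|C :\ u :\ w| => a b; exact: ar1.
set r := fun x => #|[set g in edges e :\: (A :|: B) | x \in g]|.
have r1 : forall x, x \in h1 -> 1 <= r x.
  by move=> x xh; rewrite card_gt0; apply/set0Pn; exists h1; rewrite inE h1R xh.
have r2 : (2 <= r u) || (2 <= r w).
  have h2R : h2 \in edges e :\: (A :|: B) by rewrite !inE negb_or h2A h2B h2e.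
  case/orP: uw2 => x2; [apply/orP; left | apply/orP; right];
  (apply: leq_trans (_ : #|[set h1; h2]| <= _); first by rewrite cards2 ne12);
  rewrite /r; apply: subset_leq_card; apply/subsetP => h; rewrite in_set2 => /orP[]/eqP->;
  rewrite inE ?h1R ?h2R ?x2 ?u1 //= h1E !inE eqxx ?orbT //.
have sA : A \subset edges e by case: mA.
have sB : B \subset edges e by case: mB.
have du := deg_lb _ _ _ _ u sg sA sB dAB.
have dw := deg_lb _ _ _ _ w sg sA sB dAB.
have [dgu dgu'] := andP (degs u).
have [dgw dgw'] := andP (degs w).
have n33 := no33 _ _ euw.
have ru1 := r1 u u1.
have rw1 : 1 <= r w by apply: r1; rewrite h1E !inE eqxx orbT.
(* maximality: some of u, w covered by B *)
have bcov : 0 < #|[set g in B | u \in g]| + #|[set g in B | w \in g]|.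
  rewrite addn_gt0; apply/negPn/negP; rewrite negb_or -!eqn0Ngt !cards_eq0 => /andP[/eqP Bu /eqP Bw].
  have mB' : is_matching e (h1 |: B).
    split.
      by apply/subsetP => k; rewrite !inE => /orP[/eqP->|/(subsetP sB)].
    have dh : forall k, k \in B -> [disjoint h1 & k].
      move=> k kB; rewrite -setI_eq0; apply/eqP/setP => y; rewrite !inE h1E !inE.
      case/orP: (orbN (y \in k)) => yg; last by rewrite (negbTE yg) andbF.
      rewrite yg andbT; apply/negP; case/orP=> /eqP ey; subst y.
        by move/setP: Bu => /(_ k); rewrite !inE kB yg.
      by move/setP: Bw => /(_ k); rewrite !inE kB yg.
    case: mB => _ HB f0 g0; rewrite !inE.
    case/orP=> [/eqP->|fB]; case/orP=> [/eqP->|gB]; rewrite ?eqxx //.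
    - by move=> _; apply: dh.
    - by move=> _; rewrite disjoint_sym; apply: dh.
    - exact: HB.
  have dm : disjoint_matchings e A (h1 |: B).
    split=> //; split=> //.
    rewrite -setI_eq0; apply/eqP/setP => g; rewrite !inE.
    case: (boolP (g \in A)) => gA //=.
    apply/negP => /orP[/eqP E1|gB]; first by subst g; rewrite gA in h1A.
    by rewrite -setI_eq0 in dAB; move/eqP/setP: dAB => /(_ g); rewrite !inE gA gB.
  have := maxi _ _ dm.
  rewrite setUCA cardsU1 !inE negb_or h1A h1B /=.
  by rewrite ltnn.
rewrite /r in ru1 rw1 r2.
move: du dw dgu' dgw' au aw bcov n33 r2 ru1 rw1.
move: (deg e u) (deg e w) #|[set g in edges e :\: (A :|: B) | u \in g]| #|[set g in edges e :\: (A :|: B) | w \in g]|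
  #|[set g in A | u \in g]| #|[set g in A | w \in g]|
  #|[set g in B | u \in g]| #|[set g in B | w \in g]|.
clear. move=> *; lia.
Qed.

Lemma disj2 (X : finType) (g : {set X}) a b :
  a \notin g -> b \notin g -> [disjoint g & [set a; b]].
Proof.
move=> ag bg; rewrite -setI_eq0; apply/eqP/setP => y; rewrite !inE.
by apply/negP => /andP[yg /orP[]/eqP ey]; subst y; [rewrite yg in ag | rewrite yg in bg].
Qed.

Lemma key (T : finType) (e : rel T) (A B : {set {set T}}) f u v (C1 C2 : {set T}) :
  simple_graph e -> (forall x : T, 2 <= deg e x <= 3) ->
  (forall x y : T, e x y -> ~ (deg e x = 3 /\ deg e y = 3)) ->
  disjoint_matchings e A B ->
  (forall N1 N2, disjoint_matchings e N1 N2 -> #|N1 :|: N2| <= #|A :|: B|) ->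
  f \in A -> u \in f -> v \in f ->
  #|C1| = 3 -> #|[set g in edges e :\: (A :|: B) | g \subset C1]| = 2 ->
  #|C2| = 3 -> #|[set g in edges e :\: (A :|: B) | g \subset C2]| = 2 ->
  u \in C1 -> v \in C2 -> [disjoint C1 & C2] -> False.
Proof.
move=> sg degs no33 dm maxi fA uf vf C13 C1e C23 C2e uC vC dC.
have covu : 0 < #|[set g in A | u \in g]|.
  by rewrite card_gt0; apply/set0Pn; exists f; rewrite inE fA uf.
have covv : 0 < #|[set g in A | v \in g]|.
  by rewrite card_gt0; apply/set0Pn; exists f; rewrite inE fA vf.
have [w [wC wu hR aw]] := claim _ _ _ _ _ _ sg degs no33 dm maxi C13 C1e uC covu.
have [w' [w'C w'v h'R aw']] := claim _ _ _ _ _ _ sg degs no33 dm maxi C23 C2e vC covv.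
case: (dm) => mA [mB dAB].
have sA : A \subset edges e by case: mA.
have sB : B \subset edges e by case: mB.
have Aw : forall g, g \in A -> w \notin g.
  move=> g gA; apply/negP => wg; move/eqP: aw; rewrite cards_eq0 => /eqP/setP/(_ g).
  by rewrite !inE gA wg.
have Aw' : forall g, g \in A -> w' \notin g.
  move=> g gA; apply/negP => wg; move/eqP: aw'; rewrite cards_eq0 => /eqP/setP/(_ g).
  by rewrite !inE gA wg.
have nC : forall x y, x \in C1 -> y \in C2 -> x != y.
  move=> x y xC yC; apply/eqP => exy; subst y.
  by rewrite (disjointFr dC xC) in yC.
set h := [set u; w]; set h' := [set v; w'].
have hAB : h \notin A :|: B by move: hR; rewrite !inE => /andP[].
have h'AB : h' \notin A :|: B by move: h'R; rewrite !inE => /andP[].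
have he : h \in edges e by move: hR; rewrite !inE => /andP[].
have h'e : h' \in edges e by move: h'R; rewrite !inE => /andP[].
have D1 : forall g, g \in A :\ f -> [disjoint g & h].
  move=> g; rewrite !inE => /andP[gf gA]; apply: disj2; last exact: Aw.
  apply/negP => ug; have := match_uniq _ _ _ _ _ _ mA fA gA uf ug.
  by move/eqP; rewrite (negbTE gf).
have D2 : forall g, g \in A :\ f -> [disjoint g & h'].
  move=> g; rewrite !inE => /andP[gf gA]; apply: disj2; last exact: Aw'.
  apply/negP => vg; have := match_uniq _ _ _ _ _ _ mA fA gA vf vg.
  by move/eqP; rewrite (negbTE gf).
have D3 : [disjoint h & h'].
  apply: disj2; rewrite !inE negb_or.
    by rewrite eq_sym (nC _ _ uC vC) eq_sym (nC _ _ wC vC).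
  by rewrite eq_sym (nC _ _ uC w'C) eq_sym (nC _ _ wC w'C).
have hh' : h != h'.
  apply/eqP => E; have : u \in h' by rewrite -E !inE eqxx.
  rewrite !inE => /orP[]/eqP E'; subst u.
    by move: (nC _ _ uC vC); rewrite eqxx.
  by move: (nC _ _ uC w'C); rewrite eqxx.
set N := (A :\ f) :|: [set h; h'].
have mN : is_matching e N.
  split.
    apply/subsetP => g; rewrite !inE => /orP[/andP[_ /(subsetP sA)]|/orP[]/eqP->] //.
  move=> g1 g2; rewrite /N !inE.
  case: mA => _ HA.
  case/orP=> [g1A|/orP[]/eqP->]; case/orP=> [g2A|/orP[]/eqP->]; rewrite ?eqxx //.
  - move: g1A g2A => /andP[_ g1A] /andP[_ g2A]; exact: HA.
  - move=> _; first [ exact: D3 | by rewrite disjoint_sym | by apply: D1; rewrite !inE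
    | by apply: D2; rewrite !inE | by rewrite disjoint_sym; apply: D1; rewrite !inE
    | by rewrite disjoint_sym; apply: D2; rewrite !inE].
  - move=> _; first [ exact: D3 | by rewrite disjoint_sym | by apply: D1; rewrite !inE
    | by apply: D2; rewrite !inE | by rewrite disjoint_sym; apply: D1; rewrite !inE
    | by rewrite disjoint_sym; apply: D2; rewrite !inE].
  - move=> _; first [ exact: D3 | by rewrite disjoint_sym | by apply: D1; rewrite !inE
    | by apply: D2; rewrite !inE | by rewrite disjoint_sym; apply: D1; rewrite !inE
    | by rewrite disjoint_sym; apply: D2; rewrite !inE].
  - move=> _; first [ exact: D3 | by rewrite disjoint_sym | by apply: D1; rewrite !inE
    | by apply: D2; rewrite !inE | by rewrite disjoint_sym; apply: D1; rewrite !inE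
    | by rewrite disjoint_sym; apply: D2; rewrite !inE].
  - move=> _; first [ exact: D3 | by rewrite disjoint_sym | by apply: D1; rewrite !inE
    | by apply: D2; rewrite !inE | by rewrite disjoint_sym; apply: D1; rewrite !inE
    | by rewrite disjoint_sym; apply: D2; rewrite !inE].
have dN : disjoint_matchings e N B.
  split=> //; split=> //.
  rewrite -setI_eq0; apply/eqP/setP => g; rewrite !inE.
  case: (boolP (g \in B)) => gB; rewrite ?andbF //= andbT.
  apply/negP => /orP[/andP[_ gA]|/orP[]/eqP E].
  - by rewrite (disjointFr dAB gA) in gB.
  - by subst g; move: hAB; rewrite !inE gB orbT.
  - by subst g; move: h'AB; rewrite !inE gB orbT.
have := maxi _ _ dN.
have fAB : f \in A :|: B by rewrite inE fA.
rewrite (cardsD1 f (A :|: B)) fAB.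
have S : ((A :|: B) :\ f) :|: [set h; h'] \subset N :|: B.
  apply/subsetP => g; rewrite !inE => /orP[/andP[gf /orP[gA|gB]]|->]; rewrite ?gA ?gB ?gf ?orbT //.
have := subset_leq_card S.
rewrite disjU; last first.
  apply: disj2; rewrite in_setD1 negb_and.
    by rewrite (negbTE hAB) orbT.
  by rewrite (negbTE h'AB) orbT.
rewrite cards2 hh'.
move: #|_ :\ f| #|N :|: B| => a b /=; clear; move=> *; lia.
Qed.

Lemma comp_disj (T : finType) (e : rel T) M1 M2 C1 C2 :
  C1 \in rem_comps e M1 M2 -> C2 \in rem_comps e M1 M2 -> C1 != C2 ->
  [disjoint C1 & C2].
Proof.
case/imsetP => x1 _ ->; case/imsetP => x2 _ -> ne.
have sym : connect_sym (rem_adj e M1 M2).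
  by apply: sym_connect_sym => x y; rewrite /rem_adj setUC.
rewrite -setI_eq0; apply/eqP/setP => y; rewrite !inE.
apply/negP => /andP[c1 c2]; move/negP: ne; apply; apply/eqP/setP => z.
by rewrite !inE (same_connect sym c1) (same_connect sym c2).
Qed.

Theorem lemma2 (T : finType) (e : rel T) (M1 M2 : {set {set T}}) :
  simple_graph e ->
  connected_graph e ->
  (forall x : T, 2 <= deg e x <= 3) ->
  (forall x y : T, e x y -> ~ (deg e x = 3 /\ deg e y = 3)) ->
  disjoint_matchings e M1 M2 ->
  (forall N1 N2 : {set {set T}}, disjoint_matchings e N1 N2 ->
     #|N1 :|: N2| <= #|M1 :|: M2|) ->
  (forall N1 N2 : {set {set T}}, disjoint_matchings e N1 N2 ->
     #|N1 :|: N2| = #|M1 :|: M2| -> ncomp e M1 M2 <= ncomp e N1 N2) ->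
  forall (f : {set T}) (C1 C2 : {set T}),
    f \in M1 :|: M2 ->
    C1 \in rem_comps e M1 M2 -> C2 \in rem_comps e M1 M2 ->
    C1 != C2 ->
    is_P3_comp e M1 M2 C1 -> is_P3_comp e M1 M2 C2 ->
    ~ ([exists u in f, u \in C1] && [exists v in f, v \in C2]).
Proof.
move=> sg _ degs no33 dm maxi _ f C1 C2 fM C1c C2c ne [C13 C1e] [C23 C2e].
case/andP=> /existsP[u /andP[uf uC]] /existsP[v /andP[vf vC]].
have dC := comp_disj _ _ _ _ _ _ C1c C2c ne.
case/setUP: fM => fM.
  exact: (key _ _ _ _ _ _ _ _ _ sg degs no33 dm maxi fM uf vf C13 C1e C23 C2e uC vC dC).
have maxi' : forall N1 N2, disjoint_matchings e N1 N2 -> #|N1 :|: N2| <= #|M2 :|: M1|.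
  by move=> N1 N2 d; rewrite [M2 :|: M1]setUC [N1 :|: N2]setUC; apply: maxi; apply: dmswap.
apply: (key _ _ _ _ _ _ _ _ _ sg degs no33 (dmswap _ _ _ _ dm) maxi' fM uf vf C13 _ C23 _ uC vC dC).
  by rewrite [M2 :|: M1]setUC; exact: C1e.
by rewrite [M2 :|: M1]setUC; exact: C2e.
Qed.
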